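(* Let $q \in Q$ and suppose $R_q$ contains a single simple path. Then the polytope $U(\mathcal{C}_q) = \{ x \in [0,1]^{|N|} : \sum_{j \in S} x_j \ge 1 \ \forall S \in \mathcal{C}_q\}$ is integral.
   Context: Let $G=(N,A)$ be a finite undirected graph with edge lengths $\ell_e > 0$, and let $d>0$ be the travel range, with $\ell_e \le d$ for every edge. A path is a sequence $r=(v_0,v_1,\dots,v_m)$, $m\ge 1$, of nodes in which consecutive nodes are joined by an edge (nodes may repeat); $r$ is simple if its nodes are distinct. For $x \in \{0,1\}^N$ ($x_j = 1$ meaning a charging station at node $j$), path $r$ is repeatedly traversable under $x$ if, letting $W=(v_0,\dots,v_m,v_{m-1},\dots,v_0)$ be the round trip along $r$, at least one node of $r$ has $x_j=1$ and, in the infinite periodic repetition of $W$, the distance travelled between any two consecutive visits to nodes with a station is at most $d$. Let $Q$ be a finite set of demands; each $q\in Q$ has a finite nonempty set $R_q$ of paths. For each $q \in Q$ and $r \in R_q$, $\mathcal{D}_{q,r}\subseteq 2^N$ is a family of node sets such that for every $x \in \{0,1\}^N$: $r$ is repeatedly traversable under $x$ if and only if $\sum_{j\in S} x_j \ge 1$ for all $S \in \mathcal{D}_{q,r}$. Define $\mathcal{C}_q = \{ \bigcup_{r \in R_q} S_r : S_r \in \mathcal{D}_{q,r} \text{ for each } r \in R_q\}$. *)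

(* Defs.v *)
From HB Require Import structures.
From mathcomp Require Import all_boot all_order all_algebra.
From mathcomp Require Import reals.
Set Implicit Arguments.
Unset Strict Implicit.
Unset Printing Implicit Defensive.
Import Order.TTheory GRing.Theory Num.Theory.
Local Open Scope ring_scope.

Section Defs.
Variables (R : realType) (N : finType).

Definition is_path (A : rel N) (r : seq N) : bool :=
  if r is v0 :: rest then (rest != [::]) && path A v0 rest else false.

(* one period of the infinite repetition of the round trip
   W = (v_0,...,v_m,v_{m-1},...,v_0): namely v_0,...,v_m,v_{m-1},...,v_1
   (the closing v_0 coincides with the next opening v_0). *)
Definition rt_cycle (r : seq N) : seq N :=
  r ++ rev (drop 1 (take (size r).-1 r)).

Definition rt_node (v0 : N) (rest : seq N) (k : nat) : N :=
  nth v0 (rt_cycle (v0 :: rest)) (k %% size (rt_cycle (v0 :: rest))).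

Definition rt_dist (ell : N -> N -> R) (v0 : N) (rest : seq N) (i j : nat) : R :=
  \sum_(i <= k < j) ell (rt_node v0 rest k) (rt_node v0 rest k.+1).

Definition rep_traversable (ell : N -> N -> R) (d : R) (r : seq N)
    (x : N -> bool) : Prop :=
  if r is v0 :: rest then
    (exists2 j, j \in r & x j) /\
    (forall i j : nat, (i < j)%N ->
       x (rt_node v0 rest i) -> x (rt_node v0 rest j) ->
       (forall k : nat, (i < k < j)%N -> ~~ x (rt_node v0 rest k)) ->
       rt_dist ell v0 rest i j <= d)
  else False.

Definition Cfam (Rq : seq (seq N)) (D : seq N -> {set {set N}}) (U : {set N}) : Prop :=
  exists f : seq N -> {set N},
    (forall r, r \in Rq -> f r \in D r) /\ U = \bigcup_(r <- Rq) f r.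

Definition Upoly (C : {set N} -> Prop) (x : N -> R) : Prop :=
  (forall j, 0 <= x j <= 1) /\ (forall S, C S -> 1 <= \sum_(j in S) x j).

(* vertex = extreme point of the polytope P *)
Definition extreme_point (P : (N -> R) -> Prop) (x : N -> R) : Prop :=
  P x /\ forall (y z : N -> R) (t : R), P y -> P z -> 0 < t < 1 ->
    (forall j, x j = t * y j + (1 - t) * z j) -> forall j, y j = x j /\ z j = x j.

Definition integral_polytope (P : (N -> R) -> Prop) : Prop :=
  forall x, extreme_point P x -> forall j, exists z : int, x j = z%:~R.

End Defs.

(* Main.v *)
Require Import Defs.
From HB Require Import structures.
From mathcomp Require Import all_boot all_order all_algebra.
From mathcomp Require Import reals.
From mathcomp Require Import zify lra ring.
From Stdlib Require Import Classical.
Import Order.TTheory GRing.Theory Num.Theory.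


Lemma interval_image (W : nat -> nat) (M : nat)
  (hW : forall k, W k.+1 <= (W k).+1 /\ W k <= (W k.+1).+1)
  (hM : forall k, W k < M) lo n :
  exists a b, a <= b <= M /\
    forall p, (exists k, lo <= k < lo + n /\ W k = p) <-> (a <= p < b).
Proof.
elim: n => [|n IH].
  exists 0, 0; split => // p; split; [move=> [k [Hk _]]; lia | lia].
case: n IH => [|n] IH.
  exists (W lo), (W lo).+1; split; first by have := hM lo; lia.
  move=> p; split; first by move=> [k [Hk <-]]; (have -> : k = lo by lia); lia.
  by move=> Hp; exists lo; split; [lia | lia].
have [a [b [Hab Hp]]] := IH.
have Hk0 : a <= W (lo + n) < b by apply/Hp; exists (lo + n); split; [lia|].
have [h1 h2] := hW (lo + n).
have hm := hM (lo + n).+1.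
exists (minn a (W (lo + n).+1)), (maxn b (W (lo + n).+1).+1); split; first lia.
move=> p; split.
- move=> [k [Hk <-]].
  case: (ltnP k (lo + n.+1)) => Hk2.
    have : a <= W k < b by apply/Hp; exists k; split; [lia|].
    lia.
  have -> : k = (lo + n).+1 by lia.
  lia.
- move=> Hp2.
  case: (boolP (a <= p < b)) => Hab2.
    have [k [Hk Hwk]] := (proj2 (Hp p) Hab2).
    exists k; split; [lia|done].
  exists (lo + n).+1; split; first lia.
  lia.
Qed.
Definition wf (m p : nat) : nat := if p <= m then p else 2 * m - p.

Lemma rt_node_W (N : finType) (v0 : N) rest k : rest != [::] ->
  rt_node v0 rest k = nth v0 (v0 :: rest) (wf (size rest) (k %% (2 * size rest))).
Proof.
move=> hne; set m := size rest.
have hm : 0 < m by rewrite /m lt0n size_eq0.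
rewrite /rt_node /rt_cycle.
have hs : size ((v0 :: rest) ++ rev (drop 1 (take (size (v0 :: rest)).-1 (v0 :: rest))))
   = 2 * m.
  rewrite size_cat size_rev size_drop size_take /=.
  rewrite -/m ltnSn; lia.
rewrite hs.
have hp : k %% (2 * m) < 2 * m by rewrite ltn_mod; lia.
move: hp; set p := k %% (2 * m) => hp.
rewrite nth_cat /= -/m /wf.
case: (ltnP p m.+1) => h1.
  by rewrite ifT //; lia.
rewrite ifF; last by lia.
rewrite nth_rev; last by rewrite size_drop size_take /= -/m ltnSn; lia.
rewrite nth_drop size_drop size_take /= -/m ltnSn.
rewrite nth_take; last by lia.
congr nth; lia.
Qed.

Lemma wf_step m k : 0 < m ->
  let W := fun k => wf m (k %% (2 * m)) in
  W k.+1 <= (W k).+1 /\ W k <= (W k.+1).+1 /\ W k < m.+1.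
Proof.
move=> hm W; rewrite /W.
have hp : k %% (2 * m) < 2 * m by rewrite ltn_mod; lia.
have hk := divn_eq k (2 * m).
case: (ltnP (k %% (2 * m)).+1 (2 * m)) => h.
  have -> : k.+1 %% (2 * m) = (k %% (2 * m)).+1.
    rewrite {1}hk -addnS modnMDl modn_small //.
  move: hp h; set p := k %% (2 * m) => hp h.
  rewrite /wf; do 2 case: ifP => ?; lia.
have -> : k.+1 %% (2 * m) = 0.
  have -> : k.+1 = (k %/ (2 * m)).+1 * (2 * m).
    move: hk hp h; set q := k %/ (2 * m); set p := k %% (2 * m) => hk hp h.
    set z := q * (2 * m).
    rewrite {1}hk [q.+1 * _]mulSn -/z; lia.
  by rewrite ?modnMl ?modnMr.
move: hp h; set p := k %% (2 * m) => hp h.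
rewrite /wf leq0n; case: ifP => ?; lia.
Qed.
Local Open Scope ring_scope.

Definition Jset {N : finType} (r : seq N) (a b : nat) : {set N} :=
  [set u | (u \in r) && (a <= index u r < b)%N].

Section H.
Variable R : realType.
Definition hh (t : R) : R :=
  Num.min `|t - (Num.floor t)%:~R| `|t - (Num.floor t + 1)%:~R|.

Lemma hh_le t (n : int) : hh t <= `|t - n%:~R|.
Proof.
have /andP[f1 f2] := floor_itv t.
rewrite /hh ge_min; case: (lerP n (Num.floor t)) => Hn.
- apply/orP; left.
  have : n%:~R <= (Num.floor t)%:~R :> R by rewrite ler_int.
  move=> H; rewrite (ger0_norm (x:=t - _)) ?subr_ge0 //.
  apply: le_trans (ler_norm _); lra.
- apply/orP; right.
  have : (Num.floor t + 1)%:~R <= n%:~R :> R by rewrite ler_int lezD1.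
  move=> H; have H2 : t - (Num.floor t + 1)%:~R <= 0 by lra.
  rewrite (ler0_norm H2).
  rewrite -normrN; apply: le_trans (ler_norm _); lra.
Qed.

Lemma hh_ex t : exists n : int, hh t = `|t - n%:~R|.
Proof.
rewrite /hh; case: leP => _; by eexists.
Qed.

Lemma hh_ge0 t : 0 <= hh t.
Proof. by have [n ->] := hh_ex t. Qed.

Lemma hh_lip a b : hh b - hh a <= `|b - a|.
Proof.
have [n Hn] := hh_ex a.
have := hh_le b n.
have : `|b - n%:~R| <= `|b - a| + `|a - n%:~R|.
  by rewrite -[b - n%:~R](subrKA a) ler_normD.
lra.
Qed.

Lemma hh_per t : hh (t + 1) = hh t.
Proof.
have [n Hn] := hh_ex t; have [m Hm] := hh_ex (t + 1).
apply/eqP; rewrite eq_le; apply/andP; split.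
- have := hh_le (t + 1) (n + 1); rewrite intrD.
  have -> : t + 1 - (n%:~R + 1) = t - n%:~R by ring.
  by rewrite Hn.
- have := hh_le t (m - 1); rewrite intrD.
  have -> : t - (m%:~R + (-1)%:~R) = t + 1 - m%:~R.
    by rewrite (_ : (-1)%:~R = -1 :> R) //; ring.
  by rewrite Hm.
Qed.

Lemma hh0 t : hh t = 0 -> exists n : int, t = n%:~R.
Proof.
have [n ->] := hh_ex t => /eqP; rewrite normr_eq0 subr_eq0 => /eqP ->.
by exists n.
Qed.

Lemma hh_int (n : int) : hh n%:~R = 0.
Proof.
apply/eqP; rewrite eq_le hh_ge0 andbT.
by have := hh_le n%:~R n; rewrite subrr normr0.
Qed.
End H.
Arguments hh {R}.
Arguments hh_le {R}.
Arguments hh_ex {R}.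
Arguments hh_ge0 {R}.
Arguments hh_lip {R}.
Arguments hh_per {R}.
Arguments hh0 {R}.
Arguments hh_int {R}.

Lemma hh_lip2 (R : realType) (a b : R) : a <= b -> hh b - hh a <= b - a /\ hh a - hh b <= b - a.
Proof.
move=> hab; have e : `|b - a| = b - a by rewrite ger0_norm // subr_ge0.
split; first by have := hh_lip a b; rewrite e.
by have := hh_lip b a; rewrite distrC e.
Qed.

Lemma hh_step (R : realType) (s t : R) : 0 <= t - s <= 1 ->
  -(t - s) <= hh t - hh s <= t - s /\ -(1 - (t - s)) <= hh t - hh s <= 1 - (t - s).
Proof.
move=> /andP[h1 h2].
have [a1 a2] := @hh_lip2 R (s) (t) ltac:(lra).
have [b1 b2] := @hh_lip2 R (t) (s + 1) ltac:(lra).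
rewrite hh_per in b1 b2.
split; apply/andP; split; lra.
Qed.

Lemma hh_big (R : realType) (s t : R) : 1 <= t - s ->
  -(t - s - 1) <= hh t - hh s <= t - s - 1.
Proof.
move=> h1.
have [b1 b2] := @hh_lip2 R (s + 1) (t) ltac:(lra).
rewrite hh_per in b1 b2.
apply/andP; split; lra.
Qed.

Lemma hh_zero (R : realType) : hh (0 : R) = 0.
Proof. by have := hh_int (R:=R) 0; rewrite mulr0z. Qed.

Lemma sub_le (R : realType) (N : finType) (F : N -> R) (A B : {set N}) :
  (forall u, 0 <= F u) -> A \subset B -> \sum_(u in A) F u <= \sum_(u in B) F u.
Proof.
move=> h0 /subsetP hAB.
rewrite [X in _ <= X](bigID (fun u => u \in A)) /=.
have -> : \sum_(i in B | i \in A) F i = \sum_(i in A) F i.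
  apply: eq_bigl => u /=; case hu: (u \in A); last by rewrite andbF.
  by rewrite (hAB _ hu).
rewrite lerDl; apply: sumr_ge0 => u _; exact: h0.
Qed.

Lemma sum_Jset (R : realType) (N : finType) (x0 : N) (r : seq N) a b (F : N -> R) :
  uniq r -> (a <= b)%N -> (b <= size r)%N ->
  \sum_(u in Jset r a b) F u = \sum_(a <= p < b) F (nth x0 r p).
Proof.
move=> hu hab hb.
rewrite big_mkcond /=.
transitivity (\sum_(u : N | u \in r) (if (a <= index u r < b)%N then F u else 0)).
  rewrite [RHS]big_mkcond; apply: eq_bigr => u _; rewrite inE.
  by case: (u \in r).
rewrite -big_uniq //.
rewrite (big_nth x0) /=.
transitivity (\sum_(0 <= k < size r) (if (a <= k < b)%N then F (nth x0 r k) else 0)).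
  apply: eq_big_nat => k /andP[_ hk]; rewrite index_uniq //.
rewrite (big_cat_nat (n:=a)) //=; last by lia.
rewrite (big_cat_nat (m:=a) (n:=b)) //=.
rewrite big1_seq ?add0r; last first.
  move=> k /andP[_]; rewrite mem_index_iota => hk; rewrite ifF //; lia.
rewrite [X in _ + X]big1_seq ?addr0; last first.
  move=> k /andP[_]; rewrite mem_index_iota => hk; rewrite ifF //; lia.
apply: eq_big_seq => k; rewrite mem_index_iota => hk; rewrite ifT //.
Qed.
Lemma getS (R : realType) (N : finType) (ell : N -> N -> R) (d : R) (r : seq N)
  (DD : {set {set N}})
  (hD : forall x : N -> bool, rep_traversable ell d r x <->
          (forall S, S \in DD -> (1 <= \sum_(j in S) (x j : nat))%N))
  (J : {set N}) : ~ rep_traversable ell d r (fun u => u \notin J) ->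
  exists2 S'', S'' \in DD & S'' \subset J.
Proof.
move=> hn; apply: NNPP => hne; apply: hn; apply/hD => S hS.
rewrite lt0n; apply/negP => /eqP h0.
apply: hne; exists S => //; apply/subsetP => u hu.
move/eqP: h0; rewrite sum_nat_eq0 => /forall_inP /(_ u hu).
by case: (u \in J).
Qed.

Lemma key (R : realType) (N : finType) (ell : N -> N -> R) (d : R) (v0 : N)
  (rest : seq N) (DD : {set {set N}})
  (hne : rest != [::]) (hu : uniq (v0 :: rest))
  (hD : forall x : N -> bool, rep_traversable ell d (v0 :: rest) x <->
          (forall S, S \in DD -> (1 <= \sum_(j in S) (x j : nat))%N))
  S : S \in DD -> exists a b S'', (a <= b <= size (v0 :: rest))%N /\ S'' \in DD /\
     S'' \subset Jset (v0 :: rest) a b /\ Jset (v0 :: rest) a b \subset S.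
Proof.
move=> hS.
set x := fun u => u \notin S.
have nt : ~ rep_traversable ell d (v0 :: rest) x.
  move/hD => /(_ S hS); rewrite big1 // => u hu0.
  by rewrite /x hu0.
set r := v0 :: rest.
have hm : (0 < size rest)%N by rewrite lt0n size_eq0.
case: (boolP (has x r)) => hx.
- have [i [j [hij [hi [hj [hk hd]]]]]] : exists i j : nat, (i < j)%N /\
     x (rt_node v0 rest i) /\ x (rt_node v0 rest j) /\
     (forall k : nat, (i < k < j)%N -> ~~ x (rt_node v0 rest k)) /\
     ~ (rt_dist ell v0 rest i j <= d).
    apply: NNPP => Hn; apply: nt; split.
      by move/hasP: hx => [u hu1 hxu]; exists u.
    move=> i j hij hi hj hk; apply: NNPP => hd; apply: Hn.
    by exists i, j.
  set m := size rest.
  set W := fun k => wf m (k %% (2 * m)).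
  have hW : forall k, (W k.+1 <= (W k).+1 /\ W k <= (W k.+1).+1)%N.
    by move=> k; have [? [? ?]] := wf_step m k hm.
  have hM : forall k, (W k < m.+1)%N.
    by move=> k; have [? [? ?]] := wf_step m k hm.
  have hnode : forall k, rt_node v0 rest k = nth v0 r (W k).
    by move=> k; rewrite rt_node_W.
  have [a [b [hab hp]]] := @interval_image W m.+1 hW hM i.+1 (j - i.+1).
  exists a, b.
  have hJS : Jset r a b \subset S.
    apply/subsetP => u; rewrite inE => /andP[hur hidx].
    have [k [hk1 hk2]] := proj2 (hp _) hidx.
    have := hk k ltac:(lia).
    rewrite hnode hk2 nth_index //.
    by rewrite /x negbK.
  have hnt : ~ rep_traversable ell d r (fun u => u \notin Jset r a b).
    move=> [_ H2]; apply: hd; apply: H2 => //.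
    - by apply/negP => /(subsetP hJS) hin; move: hi; rewrite /x hin.
    - by apply/negP => /(subsetP hJS) hin; move: hj; rewrite /x hin.
    - move=> k hk0; rewrite negbK hnode inE.
      have hWk : (W k < size r)%N by exact: hM.
      rewrite mem_nth // index_uniq //=.
      by apply/hp; exists k; split; [lia|].
  have [S'' hS'' hsub] := @getS R N ell d r DD hD _ hnt.
  by exists S''.
- have hJS : Jset r 0 (size r) \subset S.
    apply/subsetP => u; rewrite inE => /andP[hur _].
    by move/hasPn: hx => /(_ u hur); rewrite /x negbK.
  have hnt : ~ rep_traversable ell d r (fun u => u \notin Jset r 0 (size r)).
    move=> [[u hur hnu] _]; move: hnu.
    by rewrite inE hur leq0n index_mem hur.
  have [S'' hS'' hsub] := @getS R N ell d r DD hD _ hnt.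
  exists 0%N, (size r), S''; split; [by rewrite leq0n leqnn | by []].
Qed.

Theorem lemma3 (R : realType) (N : finType) (A : rel N) (ell : N -> N -> R) (d : R)
  (Q : finType) (Rq : Q -> seq (seq N)) (D : Q -> seq N -> {set {set N}})
  (hA : symmetric A)
  (hell_pos : forall u v, A u v -> 0 < ell u v)
  (hell_sym : forall u v, ell u v = ell v u)
  (hd : 0 < d)
  (hell_d : forall u v, A u v -> ell u v <= d)
  (hRq_ne : forall q, Rq q != [::])
  (hRq_path : forall q r, r \in Rq q -> is_path A r)
  (hD : forall q r, r \in Rq q -> forall x : N -> bool,
          rep_traversable ell d r x <->
          (forall S, S \in D q r -> (1 <= \sum_(j in S) (x j : nat))%N))
  (q : Q) (r : seq N) (hq : Rq q = [:: r]) (hsimple : uniq r) :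
  @integral_polytope R N (@Upoly R N (Cfam (Rq q) (D q))).
Proof.
have hrin : r \in Rq q by rewrite hq mem_seq1.
have hr := hRq_path q r hrin.
have hDr := hD q r hrin.
have hC : forall U, Cfam (Rq q) (D q) U <-> U \in D q r.
  move=> U; rewrite hq; split.
  - by move=> [f [hf ->]]; rewrite big_seq1; apply: hf; rewrite mem_seq1.
  - move=> hU; exists (fun _ => U); split; last by rewrite big_seq1.
    by move=> r'; rewrite mem_seq1 => /eqP ->.
case: r hq hsimple hr hrin hDr hC => [|v0 rest] // hq hsimple hr hrin hDr hC.
move: hr => /= /andP[hne _].
set r := v0 :: rest.
move=> x [[hxb hxc] hext].
have transfer : forall y : N -> R, (forall j, 0 <= y j <= 1) ->
   (forall a b, (a <= b <= size r)%N -> 1 <= \sum_(u in Jset r a b) x u ->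
        1 <= \sum_(u in Jset r a b) y u) ->
   Upoly (Cfam (Rq q) (D q)) y.
  move=> y hyb hyJ; split => // S /hC hS.
  have [a [b [S'' [hab [hS'' [h1 h2]]]]]] :=
    @key R N ell d v0 rest (D q r) hne hsimple hDr S hS.
  have hy0 : forall u, 0 <= y u by move=> u; case/andP: (hyb u).
  have hx0 : forall u, 0 <= x u by move=> u; case/andP: (hxb u).
  apply: (le_trans _ (@sub_le R N y _ _ hy0 h2)).
  apply: hyJ => //.
  apply: (le_trans _ (@sub_le R N x _ _ hx0 h1)).
  by apply: hxc; apply/hC.
set Sx := fun k => \sum_(0 <= p < k) x (nth v0 r p).
have hxn : forall k, (k < size r)%N -> x (nth v0 r k) = Sx k.+1 - Sx k.
  by move=> k hk; rewrite /Sx big_nat_recr //= addrC addrK.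
have hJsum : forall (F : N -> R) a b, (a <= b <= size r)%N ->
    \sum_(u in Jset r a b) F u = \sum_(a <= p < b) F (nth v0 r p).
  by move=> F a b /andP[h1 h2]; apply: sum_Jset.
have hSab : forall a b, (a <= b)%N -> \sum_(a <= p < b) x (nth v0 r p) = Sx b - Sx a.
  by move=> a b hab; rewrite /Sx (big_cat_nat (n:=a) (m:=0) (p:=b)) //= addrAC subrr add0r.
have half : 0 < (1 / 2 : R) < 1.
  by rewrite divr_gt0 ?ltr01 //= ltr_pdivrMr ?mul1r ?ltr1n.
move=> j; case: (boolP (j \in r)) => hjr.
- set e := fun u => if u \in r then hh (Sx (index u r).+1) - hh (Sx (index u r)) else 0.
  have he_nth : forall p, (p < size r)%N -> e (nth v0 r p) = hh (Sx p.+1) - hh (Sx p).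
    by move=> p hp; rewrite /e mem_nth // index_uniq.
  have hbnd : forall u, (0 <= x u + e u <= 1) /\ (0 <= x u - e u <= 1).
    move=> u; rewrite /e; case: ifP => hu; last first.
      by rewrite addr0 subr0; have := hxb u.
    have hk : (index u r < size r)%N by rewrite index_mem.
    have hxu : x u = Sx (index u r).+1 - Sx (index u r).
      by rewrite -hxn // nth_index.
    have := hxb u; rewrite hxu => hb.
    have [/andP[c1 c2] /andP[c3 c4]] := @hh_step R _ _ hb.
    move: hb => /andP[b1 b2].
    split; apply/andP; split; lra.
  have hesum : forall a b, (a <= b <= size r)%N ->
      \sum_(a <= p < b) e (nth v0 r p) = hh (Sx b) - hh (Sx a).
    move=> a b /andP[hab hb].
    apply: (telescope_sumr_eq (fun k => hh (Sx k))) => // k /andP[_ hk].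
    by apply: he_nth; lia.
  set y := fun u => x u + e u.
  set z := fun u => x u - e u.
  have hyP : Upoly (Cfam (Rq q) (D q)) y.
    apply: transfer; first by move=> u; have [] := hbnd u.
    move=> a b hab; rewrite !hJsum // /y big_split /= hesum // hSab; last by case/andP: hab.
    move=> h1; have := @hh_big R _ _ h1 => /andP[c1 c2]; lra.
  have hzP : Upoly (Cfam (Rq q) (D q)) z.
    apply: transfer; first by move=> u; have [] := hbnd u.
    move=> a b hab; rewrite !hJsum // /z sumrB hesum // hSab; last by case/andP: hab.
    move=> h1; have := @hh_big R _ _ h1 => /andP[c1 c2]; lra.
  have := hext y z (1 / 2) hyP hzP half.
  have hdec : forall j, x j = 1 / 2 * y j + (1 - 1 / 2) * z j.
    by move=> u; rewrite /y /z; lra.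
  move=> /(_ hdec) hyx.
  have he0 : forall u, e u = 0.
    by move=> u; have [h1 _] := hyx u; move: h1; rewrite /y; lra.
  have hint : forall k, (k <= size r)%N -> hh (Sx k) = 0.
    elim=> [|k IH] hk; first by rewrite /Sx big_geq // hh_zero.
    have := he0 (nth v0 r k); rewrite he_nth // IH; last by lia.
    by rewrite subr0.
  have hk : (index j r < size r)%N by rewrite index_mem.
  have [n1 hn1] := hh0 _ (hint _ hk).
  have [n0 hn0] := hh0 _ (hint _ (ltnW hk)).
  exists (n1 - n0); rewrite -(nth_index v0 hjr) hxn // hn1 hn0 intrB //.
- have /andP[h0 h1] := hxb j.
  case: (eqVneq (x j) 0) => h0'; first by exists 0; rewrite h0' mulr0z.
  case: (eqVneq (x j) 1) => h1'; first by exists 1; rewrite h1'.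
  exfalso.
  have hxj0 : 0 < x j by rewrite lt_neqAle eq_sym h0' h0.
  have hxj1 : x j < 1 by rewrite lt_neqAle h1' h1.
  set e := Num.min (x j) (1 - x j).
  have he0 : 0 < e by rewrite lt_min hxj0 subr_gt0 hxj1.
  have he1 : e <= x j by rewrite ge_min lexx.
  have he2 : e <= 1 - x j by rewrite ge_min lexx orbT.
  set y := fun u => if u == j then x u + e else x u.
  set z := fun u => if u == j then x u - e else x u.
  have hJeq : forall (F : N -> R) a b, (forall u, u != j -> F u = x u) ->
      \sum_(u in Jset r a b) F u = \sum_(u in Jset r a b) x u.
    move=> F a b hF; apply: eq_bigr => u; rewrite inE => /andP[hu _].
    apply: hF; apply/negP => /eqP hu'; move: hjr; by rewrite -hu' hu.
  have hyP : Upoly (Cfam (Rq q) (D q)) y.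
    apply: transfer.
      move=> u; rewrite /y; case: eqP => [->|_]; last exact: hxb.
      apply/andP; split; lra.
    move=> a b _; rewrite hJeq // => u hu; rewrite /y ifN //.
  have hzP : Upoly (Cfam (Rq q) (D q)) z.
    apply: transfer.
      move=> u; rewrite /z; case: eqP => [->|_]; last exact: hxb.
      apply/andP; split; lra.
    move=> a b _; rewrite hJeq // => u hu; rewrite /z ifN //.
  have hdec : forall u, x u = 1 / 2 * y u + (1 - 1 / 2) * z u.
    move=> u; rewrite /y /z; case: eqP => _; lra.
  have [hy _] := hext y z (1 / 2) hyP hzP half hdec j.
  move: hy; rewrite /y eqxx; lra.
Qed.
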